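(* Let $(\mathcal{B}_1,\mathcal{B}_0)$ be a Rota-Baxter operator on a crossed module of Lie groups $(H,G,t,\Phi)$, and let $\mathcal{C}$ be the small category associated with $(H,G,t,\Phi)$ (see context). Define $R_0:\mathcal{C}_0\times\mathcal{C}_0\to\mathcal{C}_0\times\mathcal{C}_0$ and $R_1:\mathcal{C}_1\times\mathcal{C}_1\to\mathcal{C}_1\times\mathcal{C}_1$ by $$R_0(c,d)=\Big(\mathrm{Ad}_{\mathcal{B}_0(c)}d,\ \mathrm{Ad}_{\mathcal{B}_0(\mathrm{Ad}_{\mathcal{B}_0(c)}d)^{-1}(\mathrm{Ad}_{\mathcal{B}_0(c)}d)^{-1}}\,c\Big),$$ $$R_1(X,Y)=\Big(\mathrm{Ad}_{\mathcal{B}(X)}Y,\ \mathrm{Ad}_{\mathcal{B}(\mathrm{Ad}_{\mathcal{B}(X)}Y)^{-1}(\mathrm{Ad}_{\mathcal{B}(X)}Y)^{-1}}\,X\Big),\quad X,Y\in G\times H,$$ where in $R_0$ the operations are in $G$, in $R_1$ they are in the semi-direct product group $(G\ltimes_\Phi H,\cdot_\Phi)$, $\mathrm{Ad}_gh=ghg^{-1}$, and $\mathcal{B}(a,p)=\big(\mathcal{B}_0(a),\ \Phi(\mathcal{B}_0(a))\mathcal{B}_1(\Phi(\mathcal{B}_0(a)^{-1}a^{-1})p)\big)$. Then $R=(R_1,R_0):\mathcal{C}\times\mathcal{C}\to\mathcal{C}\times\mathcal{C}$ is an invertible functor satisfying $$(R\times\mathrm{Id}_{\mathcal{C}})(\mathrm{Id}_{\mathcal{C}}\times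 R)(R\times\mathrm{Id}_{\mathcal{C}})=(\mathrm{Id}_{\mathcal{C}}\times R)(R\times\mathrm{Id}_{\mathcal{C}})(\mathrm{Id}_{\mathcal{C}}\times R),$$ i.e. $(\mathcal{C},R)$ is a categorical solution of the Yang-Baxter equation.
   Context: A crossed module of Lie groups is a quadruple $(H,G,t,\Phi)$ where $H,G$ are Lie groups, $t:H\to G$ is a Lie group homomorphism and $\Phi:G\to\mathrm{Aut}(H)$ is a smooth action of $G$ on $H$ by automorphisms such that $\Phi(t(p))q=pqp^{-1}$ and $t(\Phi(a)p)=a\,t(p)\,a^{-1}$ for all $p,q\in H$, $a\in G$. A Rota-Baxter operator on a Lie group $G$ is a smooth map $\mathcal{B}:G\to G$ with $\mathcal{B}(a)\mathcal{B}(b)=\mathcal{B}(a\mathcal{B}(a)b\mathcal{B}(a)^{-1})$ for all $a,b\in G$. A Rota-Baxter operator on a crossed module of Lie groups $(H,G,t,\Phi)$ is a pair $(\mathcal{B}_1,\mathcal{B}_0)$ of smooth maps $\mathcal{B}_1:H\to H$, $\mathcal{B}_0:G\to G$ such that (i) $\mathcal{B}_1,\mathcal{B}_0$ are Rota-Baxter operators on $H$, $G$; (ii) $t\circ\mathcal{B}_1=\mathcal{B}_0\circ t$; (iii) $\Phi(\mathcal{B}_0(a))\mathcal{B}_1(p)=\mathcal{B}_1\big(\Phi(a\mathcal{B}_0(a))(p\mathcal{B}_1(p))\cdot\Phi(\mathcal{B}_0(a))\mathcal{B}_1(p)^{-1}\big)$ for all $a\in G,p\in H$. The small category $\mathcal{C}$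 associated with $(H,G,t,\Phi)$: objects $\mathcal{C}_0=G$, morphisms $\mathcal{C}_1=G\times H$, source $\mathfrak{s}(a,p)=a$, target $\mathfrak{t}(a,p)=t(p)a$, composition $(a,p)\circ(b,q)=(b,pq)$ whenever $t(q)b=a$, identities $1_a=(a,e_H)$. The semi-direct product $(G\ltimes_\Phi H,\cdot_\Phi)$ is $G\times H$ with $(a,p)\cdot_\Phi(b,q)=(ab,p\Phi(a)q)$. $\mathcal{C}\times\mathcal{C}$ is the product category. A categorical solution of the Yang-Baxter equation is a pair $(\mathcal{C},R)$ with $\mathcal{C}$ a small category and $R:\mathcal{C}\times\mathcal{C}\to\mathcal{C}\times\mathcal{C}$ an invertible functor satisfying the displayed braid relation. *)

(* Defs.v *)
Record grp := Grp {
  carrier :> Type;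
  gmul : carrier -> carrier -> carrier;
  ginv : carrier -> carrier;
  gone : carrier;
  gmulA : forall x y z, gmul x (gmul y z) = gmul (gmul x y) z;
  gmul1l : forall x, gmul gone x = x;
  gmul1r : forall x, gmul x gone = x;
  gmulVl : forall x, gmul (ginv x) x = gone;
  gmulVr : forall x, gmul x (ginv x) = gone
}.

Arguments gmul {g}.
Arguments ginv {g}.
Arguments gone {g}.

Definition Ad {G : grp} (g h : G) : G := gmul (gmul g h) (ginv g).

Definition is_hom {G K : grp} (f : G -> K) : Prop :=
  forall x y, f (gmul x y) = gmul (f x) (f y).

Definition is_bijective {A B : Type} (f : A -> B) : Prop :=
  exists g : B -> A, (forall x, g (f x) = x) /\ (forall y, f (g y) = y).

Definition crossed_module (H G : grp) (t : H -> G) (Phi : G -> H -> H) : Prop :=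
  is_hom t /\
  (forall a : G, is_hom (Phi a) /\ is_bijective (Phi a)) /\
  (forall p : H, Phi gone p = p) /\
  (forall (a b : G) (p : H), Phi (gmul a b) p = Phi a (Phi b p)) /\
  (forall p q : H, Phi (t p) q = gmul (gmul p q) (ginv p)) /\
  (forall (a : G) (p : H), t (Phi a p) = gmul (gmul a (t p)) (ginv a)).

Definition rota_baxter (G : grp) (B : G -> G) : Prop :=
  forall a b : G, gmul (B a) (B b) = B (gmul (gmul (gmul a (B a)) b) (ginv (B a))).

Definition rota_baxter_xmod (H G : grp) (t : H -> G) (Phi : G -> H -> H)
    (B1 : H -> H) (B0 : G -> G) : Prop :=
  rota_baxter H B1 /\ rota_baxter G B0 /\
  (forall p : H, t (B1 p) = B0 (t p)) /\
  (forall (a : G) (p : H),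
     Phi (B0 a) (B1 p) =
     B1 (gmul (Phi (gmul a (B0 a)) (gmul p (B1 p))) (ginv (Phi (B0 a) (B1 p))))).

(* comp f g is the composite "f o g" (first g, then f); it is only
   meaningful when tgt g = src f. *)
Record cat := Cat {
  Ob : Type;
  Mo : Type;
  src : Mo -> Ob;
  tgt : Mo -> Ob;
  idm : Ob -> Mo;
  comp : Mo -> Mo -> Mo
}.

Definition prod_cat (C D : cat) : cat :=
  Cat (Ob C * Ob D) (Mo C * Mo D)
      (fun f => (src C (fst f), src D (snd f)))
      (fun f => (tgt C (fst f), tgt D (snd f)))
      (fun x => (idm C (fst x), idm D (snd x)))
      (fun f g => (comp C (fst f) (fst g), comp D (snd f) (snd g))).

Definition is_functor (C D : cat) (F0 : Ob C -> Ob D) (F1 : Mo C -> Mo D) : Prop :=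
  (forall f, src D (F1 f) = F0 (src C f)) /\
  (forall f, tgt D (F1 f) = F0 (tgt C f)) /\
  (forall x, F1 (idm C x) = idm D (F0 x)) /\
  (forall f g, tgt C g = src C f -> F1 (comp C f g) = comp D (F1 f) (F1 g)).

Definition invertible_functor (C D : cat) (F0 : Ob C -> Ob D) (F1 : Mo C -> Mo D) : Prop :=
  is_functor C D F0 F1 /\
  exists (S0 : Ob D -> Ob C) (S1 : Mo D -> Mo C),
    is_functor D C S0 S1 /\
    (forall x, S0 (F0 x) = x) /\ (forall y, F0 (S0 y) = y) /\
    (forall f, S1 (F1 f) = f) /\ (forall g, F1 (S1 g) = g).

(* (R x Id) and (Id x R) on C x C x C, represented as (C x C) x C *)
Definition RxId {A : Type} (R : A * A -> A * A) (x : (A * A) * A) : (A * A) * A :=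
  (R (fst x), snd x).
Definition IdxR {A : Type} (R : A * A -> A * A) (x : (A * A) * A) : (A * A) * A :=
  let r := R (snd (fst x), snd x) in ((fst (fst x), fst r), snd r).

Definition braid {A : Type} (R : A * A -> A * A) : Prop :=
  forall x, RxId R (IdxR R (RxId R x)) = IdxR R (RxId R (IdxR R x)).

Definition categorical_YBE_solution (C : cat)
    (R0 : Ob C * Ob C -> Ob C * Ob C) (R1 : Mo C * Mo C -> Mo C * Mo C) : Prop :=
  invertible_functor (prod_cat C C) (prod_cat C C) R0 R1 /\ braid R0 /\ braid R1.

Definition xmod_cat (H G : grp) (t : H -> G) : cat :=
  Cat (carrier G) (carrier G * carrier H)
      (fun f => fst f)
      (fun f => gmul (t (snd f)) (fst f))
      (fun a => (a, gone))
      (fun f g => (fst g, gmul (snd f) (snd g))).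

Definition sd_mul (H G : grp) (Phi : G -> H -> H) (X Y : G * H) : G * H :=
  (gmul (fst X) (fst Y), gmul (snd X) (Phi (fst X) (snd Y))).
Definition sd_inv (H G : grp) (Phi : G -> H -> H) (X : G * H) : G * H :=
  (ginv (fst X), Phi (ginv (fst X)) (ginv (snd X))).
Definition sd_Ad (H G : grp) (Phi : G -> H -> H) (X Y : G * H) : G * H :=
  sd_mul H G Phi (sd_mul H G Phi X Y) (sd_inv H G Phi X).

Definition R0_map (G : grp) (B0 : G -> G) (cd : G * G) : G * G :=
  let c := fst cd in let d := snd cd in
  let d' := Ad (B0 c) d in
  (d', Ad (gmul (ginv (B0 d')) (ginv d')) c).

Definition B_sd (H G : grp) (Phi : G -> H -> H) (B1 : H -> H) (B0 : G -> G)
    (X : G * H) : G * H :=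
  let a := fst X in let p := snd X in
  (B0 a, Phi (B0 a) (B1 (Phi (gmul (ginv (B0 a)) (ginv a)) p))).

Definition R1_map (H G : grp) (Phi : G -> H -> H) (B1 : H -> H) (B0 : G -> G)
    (XY : (G * H) * (G * H)) : (G * H) * (G * H) :=
  let X := fst XY in let Y := snd XY in
  let B := B_sd H G Phi B1 B0 in
  let Y' := sd_Ad H G Phi (B X) Y in
  (Y', sd_Ad H G Phi (sd_mul H G Phi (sd_inv H G Phi (B Y')) (sd_inv H G Phi Y')) X).

(* Main.v *)
Require Import Defs.

Lemma mulKl (G : grp) (x y : G) : gmul (ginv x) (gmul x y) = y.
Proof. rewrite gmulA, gmulVl, gmul1l. reflexivity. Qed.
Lemma mulKr (G : grp) (x y : G) : gmul x (gmul (ginv x) y) = y.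
Proof. rewrite gmulA, gmulVr, gmul1l. reflexivity. Qed.
Lemma mul_cancel_l (G : grp) (x y z : G) : gmul x y = gmul x z -> y = z.
Proof. intro E. rewrite <- (mulKl _ x y), <- (mulKl _ x z), E. reflexivity. Qed.
Lemma mul_cancel_r (G : grp) (x y z : G) : gmul y x = gmul z x -> y = z.
Proof. intro E. rewrite <- (gmul1r _ y), <- (gmul1r _ z), <- (gmulVr _ x), !gmulA, E.
 reflexivity. Qed.
Lemma inv_uniq (G : grp) (x y : G) : gmul x y = gone -> ginv x = y.
Proof. intro E. apply (mul_cancel_l _ x). rewrite gmulVr, E. reflexivity. Qed.
Lemma inv_mul (G : grp) (x y : G) : ginv (gmul x y) = gmul (ginv y) (ginv x).
Proof. apply inv_uniq. rewrite <- gmulA, mulKr, gmulVr. reflexivity. Qed.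
Lemma inv_inv (G : grp) (x : G) : ginv (ginv x) = x.
Proof. apply inv_uniq. apply gmulVl. Qed.
Lemma inv_one (G : grp) : ginv (@gone G) = gone.
Proof. apply inv_uniq. apply gmul1l. Qed.

Ltac gsimpl := repeat progress (rewrite ?inv_mul, ?inv_inv, ?inv_one;
  rewrite <- ?gmulA; rewrite ?mulKl, ?mulKr, ?gmulVl, ?gmulVr, ?gmul1l, ?gmul1r).

Lemma test (G : grp) (a b c : G) : gmul (ginv (gmul a b)) (gmul (gmul a (gmul b c)) (ginv c)) = gone.
Proof. gsimpl. reflexivity. Qed.


Definition lam (G : grp) (B : G -> G) (a b : G) : G := Ad (B a) b.
Definition circ (G : grp) (B : G -> G) (a b : G) : G := gmul a (lam G B a b).

Lemma RBc (G : grp) (B : G -> G) (hB : rota_baxter G B) a b :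
  B (circ G B a b) = gmul (B a) (B b).
Proof. rewrite hB. f_equal. unfold circ, lam, Ad. gsimpl. reflexivity. Qed.

Lemma lam_circ (G : grp) (B : G -> G) (hB : rota_baxter G B) a b c :
  lam G B (circ G B a b) c = lam G B a (lam G B b c).
Proof. unfold lam at 1. rewrite RBc by exact hB. unfold lam, Ad. gsimpl. reflexivity. Qed.

Lemma lam_mul (G : grp) (B : G -> G) a x y :
  lam G B a (gmul x y) = gmul (lam G B a x) (lam G B a y).
Proof. unfold lam, Ad. gsimpl. reflexivity. Qed.
Lemma lam_inv (G : grp) (B : G -> G) a x :
  lam G B a (ginv x) = ginv (lam G B a x).
Proof. unfold lam, Ad. gsimpl. reflexivity. Qed.
Lemma lam_inj (G : grp) (B : G -> G) a x y : lam G B a x = lam G B a y -> x = y.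
Proof. unfold lam, Ad. intro E. apply mul_cancel_r in E. apply mul_cancel_l in E. exact E. Qed.

Lemma circ_assoc (G : grp) (B : G -> G) (hB : rota_baxter G B) a b c :
  circ G B (circ G B a b) c = circ G B a (circ G B b c).
Proof. unfold circ at 1. rewrite lam_circ by exact hB. unfold circ. rewrite lam_mul.
  gsimpl. reflexivity. Qed.

Lemma circ_cancel (G : grp) (B : G -> G) a x y : circ G B a x = circ G B a y -> x = y.
Proof. unfold circ. intro E. apply mul_cancel_l in E. eapply lam_inj. exact E. Qed.

Lemma r_spec (G : grp) (B : G -> G) c d u v :
  R0_map G B (c, d) = (u, v) -> u = lam G B c d /\ circ G B u v = circ G B c d.
Proof. unfold R0_map. simpl. intro E. injection E. intros Ev Eu. split. exact (eq_sym Eu).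
  subst v. unfold circ at 2. rewrite <- Eu. generalize u. intro x. unfold circ, lam, Ad.
  gsimpl. reflexivity. Qed.

Lemma r_braid (G : grp) (B : G -> G) (hB : rota_baxter G B) : braid (R0_map G B).
Proof.
  intros [[a b] c]. unfold RxId, IdxR. cbn [fst snd].
  destruct (R0_map G B (a, b)) as [u1 v1] eqn:E1. cbn [fst snd].
  destruct (R0_map G B (v1, c)) as [u2 v2] eqn:E2. cbn [fst snd].
  destruct (R0_map G B (u1, u2)) as [u3 v3] eqn:E3. cbn [fst snd].
  destruct (R0_map G B (b, c)) as [p1 q1] eqn:F1. cbn [fst snd].
  destruct (R0_map G B (a, p1)) as [p2 q2] eqn:F2. cbn [fst snd].
  destruct (R0_map G B (q2, q1)) as [p3 q3] eqn:F3. cbn [fst snd].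
  apply r_spec in E1, E2, E3, F1, F2, F3.
  destruct E1 as [e1 c1], E2 as [e2 c2], E3 as [e3 c3], F1 as [f1 d1], F2 as [f2 d2], F3 as [f3 d3].
  assert (U : u3 = p2).
  { rewrite e3, e2, f2, f1. rewrite <- lam_circ by exact hB. rewrite c1, lam_circ by exact hB. reflexivity. }
  assert (V : v3 = p3).
  { apply (lam_inj G B u3).
    assert (A1 : lam G B u3 v3 = gmul (ginv u3) (gmul u1 u3)).
    { apply (mul_cancel_l _ u3). rewrite mulKr. fold (circ G B u3 v3). rewrite c3.
      unfold circ. rewrite <- e3. reflexivity. }
    assert (A2 : lam G B p1 q1 = gmul (ginv p1) (gmul b p1)).
    { apply (mul_cancel_l _ p1). rewrite mulKr. fold (circ G B p1 q1). rewrite d1.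
      unfold circ. rewrite <- f1. reflexivity. }
    rewrite A1. rewrite f3. rewrite U. rewrite <- lam_circ by exact hB. rewrite d2. rewrite lam_circ by exact hB. rewrite A2.
    rewrite !lam_mul, lam_inv, <- f2, <- e1. reflexivity. }
  assert (W : v2 = q3).
  { apply (circ_cancel G B (circ G B u3 v3)).
    transitivity (circ G B a (circ G B b c)).
    - rewrite c3, circ_assoc, c2, <- circ_assoc, c1, circ_assoc by exact hB. reflexivity.
    - symmetry. rewrite U, V, circ_assoc, d3, <- circ_assoc, d2, circ_assoc, d1 by exact hB. reflexivity. }
  rewrite U, V, W. reflexivity.
Qed.


Definition Sinv (G : grp) (B : G -> G) (xy : G * G) : G * G :=
  let x := fst xy in let y := snd xy in
  let z := circ G B x y in let c := gmul z (ginv x) in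
  (c, Ad (ginv (B c)) (gmul (ginv c) z)).

Lemma Sinv_r (G : grp) (B : G -> G) cd : Sinv G B (R0_map G B cd) = cd.
Proof. destruct cd as [c d].
  destruct (R0_map G B (c, d)) as [u v] eqn:E. apply r_spec in E. destruct E as [e1 e2].
  unfold Sinv. cbv zeta. cbn [fst snd]. rewrite e2. unfold circ. rewrite <- e1.
  assert (Hc : gmul (gmul c u) (ginv u) = c) by (gsimpl; reflexivity).
  rewrite Hc. f_equal. rewrite e1. unfold lam, Ad. gsimpl. reflexivity. Qed.

Lemma r_Sinv (G : grp) (B : G -> G) xy : R0_map G B (Sinv G B xy) = xy.
Proof. destruct xy as [x y]. unfold Sinv. cbn [fst snd].
  set (c := gmul (circ G B x y) (ginv x)).
  set (d := Ad (ginv (B c)) (gmul (ginv c) (circ G B x y))).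
  destruct (R0_map G B (c, d)) as [u v] eqn:E. apply r_spec in E. destruct E as [e1 e2].
  assert (U : u = x).
  { rewrite e1. unfold lam, d, c, Ad. gsimpl. reflexivity. }
  rewrite U in e1, e2. rewrite U. f_equal. apply (circ_cancel G B x). rewrite e2. unfold circ at 1. rewrite <- e1.
  unfold c. gsimpl. reflexivity. Qed.

Lemma r_hom (K G : grp) (BK : K -> K) (BG : G -> G) (P : K -> Prop) (f : K -> G)
  (Pmul : forall x y, P x -> P y -> P (gmul x y)) (Pinv : forall x, P x -> P (ginv x))
  (PB : forall x, P x -> P (BK x))
  (fmul : forall x y, P x -> P y -> f (gmul x y) = gmul (f x) (f y))
  (fB : forall x, P x -> f (BK x) = BG (f x)) x y (Px : P x) (Py : P y) :
  (f (fst (R0_map K BK (x, y))), f (snd (R0_map K BK (x, y)))) = R0_map G BG (f x, f y).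
Proof.
  assert (finv : forall z, P z -> f (ginv z) = ginv (f z)).
  { intros z Pz. symmetry. apply inv_uniq. rewrite <- fmul by auto. rewrite gmulVr.
    apply (mul_cancel_l _ (f gone)). rewrite gmul1r, <- fmul. rewrite gmul1l. reflexivity.
    all: rewrite <- (gmulVr _ z); auto. }
  unfold R0_map, Ad. cbn [fst snd].
  repeat first [ rewrite fmul by (repeat first [apply Pmul | apply Pinv | apply PB | assumption])
               | rewrite finv by (repeat first [apply Pmul | apply Pinv | apply PB | assumption])
               | rewrite fB by (repeat first [apply Pmul | apply Pinv | apply PB | assumption]) ].
  reflexivity.
Qed.

Definition prodgrp (K1 K2 : grp) : grp.
Proof.
  refine (Grp (K1 * K2) (fun x y => (gmul (fst x) (fst y), gmul (snd x) (snd y)))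
    (fun x => (ginv (fst x), ginv (snd x))) (gone, gone) _ _ _ _ _).
  - intros. cbn. rewrite !gmulA. reflexivity.
  - intros [] . cbn. rewrite !gmul1l. reflexivity.
  - intros [] . cbn. rewrite !gmul1r. reflexivity.
  - intros [] . cbn. rewrite !gmulVl. reflexivity.
  - intros [] . cbn. rewrite !gmulVr. reflexivity.
Defined.

Lemma r_prod (K : grp) (B : K -> K) x1 x2 y1 y2 :
  R0_map (prodgrp K K) (fun X => (B (fst X), B (snd X))) ((x1, x2), (y1, y2)) =
  ((fst (R0_map K B (x1, y1)), fst (R0_map K B (x2, y2))),
   (snd (R0_map K B (x1, y1)), snd (R0_map K B (x2, y2)))).
Proof. reflexivity. Qed.

Lemma inv_functor (C D : cat) F0 F1 S0 S1 :
  is_functor C D F0 F1 ->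
  (forall x, S0 (F0 x) = x) -> (forall y, F0 (S0 y) = y) ->
  (forall f, S1 (F1 f) = f) -> (forall g, F1 (S1 g) = g) ->
  is_functor D C S0 S1.
Proof.
  intros [Fs [Ft [Fi Fc]]] h1 h2 h3 h4.
  assert (inj0 : forall x y, F0 x = F0 y -> x = y).
  { intros x y E. rewrite <- (h1 x), <- (h1 y), E. reflexivity. }
  assert (inj1 : forall x y, F1 x = F1 y -> x = y).
  { intros x y E. rewrite <- (h3 x), <- (h3 y), E. reflexivity. }
  assert (Ss : forall g, src C (S1 g) = S0 (src D g)).
  { intro g. apply inj0. rewrite <- Fs, h4, h2. reflexivity. }
  assert (St : forall g, tgt C (S1 g) = S0 (tgt D g)).
  { intro g. apply inj0. rewrite <- Ft, h4, h2. reflexivity. }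
  split; [exact Ss|]. split; [exact St|]. split.
  - intro x. apply inj1. rewrite Fi, h4, h2. reflexivity.
  - intros f g E. apply inj1. rewrite Fc. rewrite !h4. reflexivity.
    rewrite St, Ss, E. reflexivity.
Qed.


Lemma Phi_one (H G : grp) (Phi : G -> H -> H) (hom : forall a, is_hom (Phi a)) a :
  Phi a gone = gone.
Proof. apply (mul_cancel_l _ (Phi a gone)). rewrite <- hom, !gmul1r. reflexivity. Qed.
Lemma Phi_inv (H G : grp) (Phi : G -> H -> H) (hom : forall a, is_hom (Phi a)) a p :
  Phi a (ginv p) = ginv (Phi a p).
Proof. symmetry. apply inv_uniq. rewrite <- hom, gmulVr. apply Phi_one; auto. Qed.
Lemma hom_one (H G : grp) (f : H -> G) (hf : is_hom f) : f gone = gone.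
Proof. apply (mul_cancel_l _ (f gone)). rewrite <- hf, !gmul1r. reflexivity. Qed.
Lemma hom_inv (H G : grp) (f : H -> G) (hf : is_hom f) p : f (ginv p) = ginv (f p).
Proof. symmetry. apply inv_uniq. rewrite <- hf, gmulVr. apply hom_one; auto. Qed.

Definition sdgrp (H G : grp) (Phi : G -> H -> H) (hom : forall a, is_hom (Phi a))
  (h1 : forall p, Phi gone p = p) (hM : forall a b p, Phi (gmul a b) p = Phi a (Phi b p)) : grp.
Proof.
  refine (Grp (G * H) (sd_mul H G Phi) (sd_inv H G Phi) (gone, gone) _ _ _ _ _);
  unfold sd_mul, sd_inv; intros; repeat match goal with x : _ * _ |- _ => destruct x end; cbn.
  - rewrite !gmulA, hom, hM, !gmulA. reflexivity.
  - rewrite !gmul1l, h1. reflexivity.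
  - rewrite !gmul1r, Phi_one, gmul1r by exact hom. reflexivity.
  - rewrite gmulVl, <- hom, gmulVl, Phi_one by exact hom. reflexivity.
  - rewrite gmulVr, <- hM, gmulVr, h1, gmulVr. reflexivity.
Defined.

Ltac unpack Phi t hX hB :=
  let ht := fresh "ht" in let hPhi := fresh "hPhi" in
  destruct hX as (ht & hPhi & h1 & hM & hPe & hEq);
  destruct hB as (RB1 & RB0 & hC & hiii);
  assert (hom : forall a, is_hom (Phi a)) by (let x := fresh in intro x; exact (proj1 (hPhi x)));
  assert (PM : forall a p q, Phi a (gmul p q) = gmul (Phi a p) (Phi a q)) by (intros; apply hom);
  pose proof (Phi_one _ _ Phi hom) as P1;
  pose proof (Phi_inv _ _ Phi hom) as PI;
  assert (tM : forall p q, t (gmul p q) = gmul (t p) (t q)) by (intros; apply ht);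
  pose proof (hom_one _ _ t ht) as t1;
  pose proof (hom_inv _ _ t ht) as tI.

Ltac psimpl' PM PI P1 h1 hM := repeat progress (rewrite ?PM, ?PI, ?P1, ?h1; rewrite <- ?hM; gsimpl).

Lemma RB_one (G : grp) (B : G -> G) (hB : rota_baxter G B) : B gone = gone.
Proof. apply (mul_cancel_l _ (B gone)). rewrite hB, gmul1r. f_equal. gsimpl. reflexivity. Qed.
Lemma RB_inv (G : grp) (B : G -> G) (hB : rota_baxter G B) a :
  B (gmul (gmul (ginv (B a)) (ginv a)) (B a)) = ginv (B a).
Proof. symmetry. apply inv_uniq. rewrite hB. rewrite <- (RB_one G B hB). f_equal. gsimpl. reflexivity. Qed.

Lemma sd_RB (H G : grp) (t : H -> G) (Phi : G -> H -> H) (B1 : H -> H) (B0 : G -> G)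
    (hX : crossed_module H G t Phi) (hB : rota_baxter_xmod H G t Phi B1 B0) hom' h1' hM' :
  rota_baxter (sdgrp H G Phi hom' h1' hM') (B_sd H G Phi B1 B0).
Proof.
  unpack Phi t hX hB. intros [a p] [b q]. cbn [sdgrp gmul ginv]. unfold sd_mul, sd_inv, B_sd. cbn [fst snd].
  rewrite <- RB0.
  set (pt := Phi (ginv (gmul a (B0 a))) p).
  assert (Ep : p = Phi (gmul a (B0 a)) pt) by (unfold pt; psimpl' PM PI P1 h1 hM; reflexivity).
  clearbody pt. subst p.
  set (qt := Phi (ginv (gmul b (B0 b))) q).
  assert (Eq : q = Phi (gmul b (B0 b)) qt) by (unfold qt; psimpl' PM PI P1 h1 hM; reflexivity).
  clearbody qt. subst q.
  f_equal. psimpl' PM PI P1 h1 hM.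
  assert (Hm : Phi (ginv (B0 b)) (B1 pt) = B1 (gmul (Phi (gmul (ginv (B0 b)) (ginv b)) pt)
     (gmul (Phi (gmul (ginv (B0 b)) (ginv b)) (B1 pt)) (ginv (Phi (ginv (B0 b)) (B1 pt)))))).
  { pose proof (hiii (gmul (gmul (ginv (B0 b)) (ginv b)) (B0 b)) pt) as E.
    rewrite (RB_inv _ _ RB0) in E. etransitivity; [exact E|]. f_equal. psimpl' PM PI P1 h1 hM. reflexivity. }
  assert (K : B1 (gmul (Phi (gmul (ginv (B0 b)) (ginv b)) pt)
         (gmul (Phi (gmul (ginv (B0 b)) (ginv b)) (B1 pt))
            (gmul qt (ginv (Phi (ginv (B0 b)) (B1 pt)))))) = gmul (Phi (ginv (B0 b)) (B1 pt)) (B1 qt)).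
  { symmetry. etransitivity. { apply (f_equal (fun x => gmul x (B1 qt))). exact Hm. }
    rewrite RB1. rewrite <- Hm. f_equal. psimpl' PM PI P1 h1 hM. reflexivity. }
  rewrite K. psimpl' PM PI P1 h1 hM. reflexivity.
Qed.


Definition tau (H G : grp) (t : H -> G) (X : G * H) : G := gmul (t (snd X)) (fst X).

Lemma tau_mul (H G : grp) (t : H -> G) (Phi : G -> H -> H) (B1 : H -> H) (B0 : G -> G)
    (hX : crossed_module H G t Phi) (hB : rota_baxter_xmod H G t Phi B1 B0) X Y :
  tau H G t (sd_mul H G Phi X Y) = gmul (tau H G t X) (tau H G t Y).
Proof. unpack Phi t hX hB. destruct X as [a p], Y as [b q]. unfold tau, sd_mul. cbn [fst snd].
  rewrite tM, hEq. gsimpl. reflexivity. Qed.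

Lemma tau_B (H G : grp) (t : H -> G) (Phi : G -> H -> H) (B1 : H -> H) (B0 : G -> G)
    (hX : crossed_module H G t Phi) (hB : rota_baxter_xmod H G t Phi B1 B0) X :
  tau H G t (B_sd H G Phi B1 B0 X) = B0 (tau H G t X).
Proof. unpack Phi t hX hB. destruct X as [a p]. unfold tau, B_sd. cbn [fst snd].
  rewrite hEq, hC, hEq. rewrite <- gmulA, gmulVl, gmul1r. rewrite RB0. f_equal. gsimpl. reflexivity. Qed.

Lemma i_B (H G : grp) (t : H -> G) (Phi : G -> H -> H) (B1 : H -> H) (B0 : G -> G)
    (hX : crossed_module H G t Phi) (hB : rota_baxter_xmod H G t Phi B1 B0) a :
  B_sd H G Phi B1 B0 (a, gone) = (B0 a, gone).
Proof. unpack Phi t hX hB. unfold B_sd. cbn [fst snd]. rewrite P1, (RB_one _ _ RB1), P1. reflexivity. Qed.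

Lemma i_mul (H G : grp) (t : H -> G) (Phi : G -> H -> H) (B1 : H -> H) (B0 : G -> G)
    (hX : crossed_module H G t Phi) (hB : rota_baxter_xmod H G t Phi B1 B0) a b :
  sd_mul H G Phi (a, gone) (b, gone) = (gmul a b, gone).
Proof. unpack Phi t hX hB. unfold sd_mul. cbn [fst snd]. rewrite P1, gmul1l. reflexivity. Qed.

Definition mcomp (H G : grp) (X : (G * H) * (G * H)) : G * H :=
  (fst (snd X), gmul (snd (fst X)) (snd (snd X))).

Lemma m_mul (H G : grp) (t : H -> G) (Phi : G -> H -> H) (B1 : H -> H) (B0 : G -> G)
    (hX : crossed_module H G t Phi) (hB : rota_baxter_xmod H G t Phi B1 B0) a1 p1 b1 q1 a2 p2 b2 q2 :
  gmul (t q1) b1 = a1 ->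
  mcomp H G (sd_mul H G Phi (a1, p1) (a2, p2), sd_mul H G Phi (b1, q1) (b2, q2)) =
  sd_mul H G Phi (mcomp H G ((a1, p1), (b1, q1))) (mcomp H G ((a2, p2), (b2, q2))).
Proof. unpack Phi t hX hB. intro E. subst a1. unfold mcomp, sd_mul. cbn [fst snd].
  rewrite hM, hPe, PM. gsimpl. reflexivity. Qed.

Lemma m_B (H G : grp) (t : H -> G) (Phi : G -> H -> H) (B1 : H -> H) (B0 : G -> G)
    (hX : crossed_module H G t Phi) (hB : rota_baxter_xmod H G t Phi B1 B0) a p b q :
  gmul (t q) b = a ->
  mcomp H G (B_sd H G Phi B1 B0 (a, p), B_sd H G Phi B1 B0 (b, q)) =
  B_sd H G Phi B1 B0 (mcomp H G ((a, p), (b, q))).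
Proof. unpack Phi t hX hB. intro E. subst a. unfold mcomp, B_sd. cbn [fst snd]. f_equal.
  set (qt := Phi (ginv (gmul b (B0 b))) q).
  assert (Eq : q = Phi (gmul b (B0 b)) qt) by (unfold qt; psimpl' PM PI P1 h1 hM; reflexivity).
  clearbody qt. subst q.
  assert (Ea : B0 (gmul (t (Phi (gmul b (B0 b)) qt)) b) = gmul (B0 b) (t (B1 qt))).
  { rewrite hC, RB0. f_equal. rewrite hEq. gsimpl. reflexivity. }
  rewrite Ea.
  set (pt := Phi (gmul (ginv (gmul (B0 b) (t (B1 qt)))) (ginv (gmul (t (Phi (gmul b (B0 b)) qt)) b))) p).
  assert (Ep : p = Phi (gmul (gmul (t (Phi (gmul b (B0 b)) qt)) b) (gmul (B0 b) (t (B1 qt)))) pt)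
    by (unfold pt; psimpl' PM PI P1 h1 hM; reflexivity).
  clearbody pt. subst p.
  rewrite hEq. psimpl' PM PI P1 h1 hM.
  assert (hPe' : forall p g x, Phi (gmul (t p) g) x = gmul (gmul p (Phi g x)) (ginv p)).
  { intros. rewrite hM, hPe. reflexivity. }
  rewrite hPe', hPe. gsimpl.
  assert (Kq : B1 (gmul qt (gmul (B1 qt) (gmul pt (ginv (B1 qt))))) = gmul (B1 qt) (B1 pt)).
  { rewrite RB1. f_equal. gsimpl. reflexivity. }
  rewrite Kq, hM, hPe. psimpl' PM PI P1 h1 hM. reflexivity.
Qed.

Lemma tau_inv (H G : grp) (t : H -> G) (Phi : G -> H -> H) (B1 : H -> H) (B0 : G -> G)
    (hX : crossed_module H G t Phi) (hB : rota_baxter_xmod H G t Phi B1 B0) X :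
  tau H G t (sd_inv H G Phi X) = ginv (tau H G t X).
Proof. unpack Phi t hX hB. destruct X as [a p]. unfold tau, sd_inv. cbn [fst snd].
  rewrite hEq, tI. gsimpl. reflexivity. Qed.


Theorem theorem3p3 (H G : grp) (t : H -> G) (Phi : G -> H -> H)
    (B1 : H -> H) (B0 : G -> G)
    (hX : crossed_module H G t Phi)
    (hB : rota_baxter_xmod H G t Phi B1 B0) :
  categorical_YBE_solution (xmod_cat H G t)
    (R0_map G B0) (R1_map H G Phi B1 B0).
Proof.
  pose proof hX as hX'. pose proof hB as hB'.
  destruct hX' as (ht & hPhi & h1 & hM & hPe & hEq).
  destruct hB' as (RB1 & RB0 & hC & hiii).
  assert (hom : forall a, is_hom (Phi a)) by (intro a; exact (proj1 (hPhi a))).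
  set (K := sdgrp H G Phi hom h1 hM).
  set (BK := B_sd H G Phi B1 B0).
  assert (RBK : rota_baxter K BK) by exact (sd_RB H G t Phi B1 B0 hX hB hom h1 hM).
  assert (R1eq : forall XY, R1_map H G Phi B1 B0 XY = R0_map K BK XY) by reflexivity.
  assert (Fun : is_functor (prod_cat (xmod_cat H G t) (xmod_cat H G t))
                  (prod_cat (xmod_cat H G t) (xmod_cat H G t)) (R0_map G B0) (R1_map H G Phi B1 B0)).
  { split; [|split; [|split]].
    - intros [f1 f2]. cbn [prod_cat xmod_cat src fst snd]. rewrite R1eq.
      exact (r_hom K G BK B0 (fun _ => True) fst (fun _ _ _ _ => I) (fun _ _ => I) (fun _ _ => I)
               (fun _ _ _ _ => eq_refl) (fun _ _ => eq_refl) f1 f2 I I).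
    - intros [f1 f2]. cbn [prod_cat xmod_cat tgt fst snd]. rewrite R1eq.
      exact (r_hom K G BK B0 (fun _ => True) (tau H G t) (fun _ _ _ _ => I) (fun _ _ => I) (fun _ _ => I)
               (fun x y _ _ => tau_mul H G t Phi B1 B0 hX hB x y) (fun x _ => tau_B H G t Phi B1 B0 hX hB x) f1 f2 I I).
    - intros [x1 x2]. cbn [prod_cat xmod_cat idm fst snd]. rewrite R1eq. symmetry.
      exact (r_hom G K B0 BK (fun _ => True) (fun a => (a, gone)) (fun _ _ _ _ => I) (fun _ _ => I) (fun _ _ => I)
               (fun x y _ _ => eq_sym (i_mul H G t Phi B1 B0 hX hB x y)) (fun x _ => eq_sym (i_B H G t Phi B1 B0 hX hB x)) x1 x2 I I).
    - intros [f1 f2] [g1 g2] E. cbn [prod_cat xmod_cat tgt src fst snd] in E.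
      injection E. intros E2 E1.
      cbn [prod_cat xmod_cat comp fst snd]. rewrite !R1eq.
      pose proof (r_hom (prodgrp K K) K (fun X => (BK (fst X), BK (snd X)))
                   BK (fun X => tau H G t (snd X) = fst (fst X)) (mcomp H G)) as RH.
      assert (S1 : forall x y : prodgrp K K, tau H G t (snd x) = fst (fst x) -> tau H G t (snd y) = fst (fst y) ->
                   tau H G t (snd (gmul x y)) = fst (fst (gmul x y))).
      { intros [x1 x2] [y1 y2] Px Py. cbn [prodgrp gmul fst snd] in *.
        change (tau H G t (sd_mul H G Phi x2 y2) = gmul (fst x1) (fst y1)).
        rewrite (tau_mul H G t Phi B1 B0 hX hB), Px, Py. reflexivity. }
      assert (S2 : forall x : prodgrp K K, tau H G t (snd x) = fst (fst x) ->
                   tau H G t (snd (ginv x)) = fst (fst (ginv x))).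
      { intros [x1 x2] Px. cbn [prodgrp ginv fst snd] in *.
        change (tau H G t (sd_inv H G Phi x2) = ginv (fst x1)).
        rewrite (tau_inv H G t Phi B1 B0 hX hB), Px. reflexivity. }
      assert (S3 : forall x : prodgrp K K, tau H G t (snd x) = fst (fst x) ->
                   tau H G t (BK (snd x)) = fst (BK (fst x))).
      { intros [x1 x2] Px. cbn [fst snd] in *. unfold BK. rewrite (tau_B H G t Phi B1 B0 hX hB), Px. reflexivity. }
      assert (S4 : forall x y : prodgrp K K, tau H G t (snd x) = fst (fst x) -> tau H G t (snd y) = fst (fst y) ->
                   mcomp H G (gmul x y) = @gmul K (mcomp H G x) (mcomp H G y)).
      { intros [[a1 p1] [b1 q1]] [[a2 p2] [b2 q2]] Px Py. cbn [prodgrp gmul fst snd] in *.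
        apply (m_mul H G t Phi B1 B0 hX hB). exact Px. }
      assert (S5 : forall x : prodgrp K K, tau H G t (snd x) = fst (fst x) ->
                   mcomp H G (BK (fst x), BK (snd x)) = BK (mcomp H G x)).
      { intros [[a p] [b q]] Px. cbn [fst snd] in *. unfold BK.
        apply (m_B H G t Phi B1 B0 hX hB). exact Px. }
      specialize (RH S1 S2 S3 S4 S5 (f1, g1) (f2, g2) E1 E2).
      destruct f1, f2, g1, g2. rewrite r_prod in RH. symmetry. exact RH. }
  split; [split; [exact Fun|] | split].
  - exists (Sinv G B0), (Sinv K BK).
    assert (a1 : forall x, Sinv G B0 (R0_map G B0 x) = x) by (intro; apply Sinv_r).
    assert (a2 : forall y, R0_map G B0 (Sinv G B0 y) = y) by (intro; apply r_Sinv).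
    assert (a3 : forall f, Sinv K BK (R1_map H G Phi B1 B0 f) = f) by (intro f; rewrite R1eq; exact (Sinv_r K BK f)).
    assert (a4 : forall g, R1_map H G Phi B1 B0 (Sinv K BK g) = g) by (intro g; rewrite R1eq; exact (r_Sinv K BK g)).
    split; [|split; [exact a1|split; [exact a2|split; [exact a3|exact a4]]]].
    exact (inv_functor _ _ _ _ _ _ Fun a1 a2 a3 a4).
  - exact (r_braid G B0 RB0).
  - exact (r_braid K BK RBK).
Qed.
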